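(* Let $G$ be a group with identity $\mathbf{1}$, $S\subseteq G$ inverse-closed, and $X=\mathrm{Cay}(G;S)$. If the group $\mathcal{A}^0_{\mathbf{1}}(X)$ of colour-preserving automorphisms of $X$ fixing $\mathbf{1}$ is trivial (equivalently, every colour-preserving automorphism of $X$ is a left translation $x\mapsto gx$), then $X$ is strongly CCA.
   Context: Graphs are simple (possibly infinite). For an inverse-closed subset $S$ of a group $G$, $\mathrm{Cay}(G;S)$ has vertex set $G$ and an edge from $g$ to $gs$ for each $g\in G$, $s\in S$; the edge $g$—$gs$ is coloured $\{s,s^{-1}\}$. A graph automorphism is colour-preserving if it maps every edge to an edge of the same colour, and colour-permuting if whenever two edges have the same colour their images also have the same colour. A map $\varphi\colon G\to G$ is affine if $\varphi(x)=\alpha(gx)$ for some $\alpha\in\mathrm{Aut}(G)$, $g\in G$. $\mathrm{Cay}(G;S)$ is strongly CCA if every colour-permuting automorphism of it is affine. *)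

(* Defs.v *)
From mathcomp Require Import ssreflect ssrfun ssrbool.

Set Implicit Arguments.
Unset Strict Implicit.

Record is_group (G : Type) (mul : G -> G -> G) (one : G) (inv : G -> G) : Prop :=
  IsGroup {
    mulA : forall x y z, mul x (mul y z) = mul (mul x y) z;
    mul1g : forall x, mul one x = x;
    mulg1 : forall x, mul x one = x;
    mulVg : forall x, mul (inv x) x = one;
    mulgV : forall x, mul x (inv x) = one
  }.

Section Cayley.
Variables (G : Type) (mul : G -> G -> G) (one : G) (inv : G -> G).
Variable S : G -> Prop.

Definition inverse_closed : Prop := forall s, S s -> S (inv s).

Definition cay_adj (x y : G) : Prop := exists2 s, S s & y = mul x s.

Definition edge_colour (x y : G) : G -> Prop :=
  fun s => s = mul (inv x) y \/ s = mul (inv y) x.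

Definition same_colour (x y u v : G) : Prop :=
  forall s, edge_colour x y s <-> edge_colour u v s.

Definition cay_automorphism (f : G -> G) : Prop :=
  bijective f /\ forall x y, cay_adj x y <-> cay_adj (f x) (f y).

Definition colour_preserving (f : G -> G) : Prop :=
  cay_automorphism f /\
  forall x y, cay_adj x y -> same_colour x y (f x) (f y).

Definition colour_permuting (f : G -> G) : Prop :=
  cay_automorphism f /\
  forall x y u v, cay_adj x y -> cay_adj u v -> same_colour x y u v ->
    same_colour (f x) (f y) (f u) (f v).

Definition group_automorphism (a : G -> G) : Prop :=
  bijective a /\ forall x y, a (mul x y) = mul (a x) (a y).

Definition affine (f : G -> G) : Prop :=
  exists a g, group_automorphism a /\ forall x, f x = a (mul g x).

Definition A0_one_trivial : Prop :=
  forall f, colour_preserving f -> f one = one -> forall x, f x = x.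

Definition strongly_CCA : Prop :=
  forall f, colour_permuting f -> affine f.
End Cayley.

(* Main.v *)
Require Import Defs.
From mathcomp Require Import ssreflect ssrfun ssrbool.

Theorem corollary4p7 (G : Type) (mul : G -> G -> G) (one : G) (inv : G -> G)
  (S : G -> Prop) :
  is_group mul one inv ->
  inverse_closed inv S ->
  A0_one_trivial mul one inv S ->
  strongly_CCA mul inv S.
Proof.
move=> [mA m1 m1' mV mV'] _ A0 f [[fbij fadj] fcol].
have invM : forall x y, inv (mul x y) = mul (inv y) (inv x).
  move=> x y.
  have E : mul (mul x y) (mul (inv y) (inv x)) = one.
    by rewrite -mA (mA y) mV' m1 mV'.
  by rewrite -[inv (mul x y)]m1' -E mA mV m1.
have cancL : forall h x y, mul h x = mul h y -> x = y.
  move=> h x y E; by rewrite -(m1 x) -(m1 y) -(mV h) -!mA E.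
have adjT : forall h x y, cay_adj mul S x y <-> cay_adj mul S (mul h x) (mul h y).
  move=> h x y; split.
    by move=> [s Ss ->]; exists s => //; rewrite mA.
  move=> [s Ss E]; exists s => //.
  by apply: (cancL h); rewrite E mA.
have colT : forall h x y, same_colour mul inv x y (mul h x) (mul h y).
  move=> h x y.
  have K : forall u v, mul (inv (mul h u)) (mul h v) = mul (inv u) v.
    by move=> u v; rewrite invM -mA (mA (inv h)) mV m1.
  move=> s; rewrite /edge_colour !K; by [].
have scT : forall a b c d i j, same_colour mul inv a b c d ->
    same_colour mul inv c d i j -> same_colour mul inv a b i j.
  move=> a b c d i j H1 H2 s; split=> H.
    by apply/(H2 s); apply/(H1 s).
  by apply/(H1 s); apply/(H2 s).
case: fbij => finv fK Kf.
have finvadj : forall x y, cay_adj mul S x y -> cay_adj mul S (finv x) (finv y).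
  move=> x y H; apply/fadj; by rewrite !Kf.
have finviff : forall x y, cay_adj mul S x y <-> cay_adj mul S (finv x) (finv y).
  move=> x y; split; first exact: finvadj.
  by move/fadj; rewrite !Kf.
set p := f one.
have claim : forall g x, mul (inv (f g)) (f (mul g x)) = mul (inv p) (f x).
  move=> g x.
  pose chi y := mul (inv (f g)) (f (mul g (finv (mul p y)))).
  have chi1 : chi one = one.
    by rewrite /chi m1' /p fK m1' mV.
  have chiK : forall y, chi y = y.
    apply: A0 => //.
    have chiadj : forall y z, cay_adj mul S y z <-> cay_adj mul S (chi y) (chi z).
      move=> y z; rewrite /chi.
      apply: (iff_trans (adjT p y z)).
      apply: (iff_trans (finviff _ _)).
      apply: (iff_trans (adjT g _ _)).
      apply: (iff_trans (fadj _ _)).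
      exact: adjT.
    split; first split.
    - exists (fun y => mul (inv p) (f (mul (inv g) (finv (mul (f g) y))))).
        move=> y; rewrite /chi mA mV' m1 fK mA mV m1 Kf mA mV m1 //.
      move=> y; rewrite /chi mA (mV' p) m1 fK mA (mV' g) m1 Kf mA mV m1 //.
    - exact: chiadj.
    move=> y z Hyz.
    set y' := finv (mul p y); set z' := finv (mul p z).
    have Hyz' : cay_adj mul S y' z' by apply: finvadj; exact: (proj1 (adjT p y z) Hyz).
    have Hg : cay_adj mul S (mul g y') (mul g z') by exact: (proj1 (adjT g y' z') Hyz').
    have E := fcol _ _ _ _ Hyz' Hg (colT g y' z').
    rewrite /y' /z' !Kf in E.
    apply: (scT _ _ _ _ _ _ (colT p y z)).
    apply: (scT _ _ _ _ _ _ E).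
    move=> s; split=> H.
      by apply/(colT (inv (f g)) (f (mul g y')) (f (mul g z')) s).
    by apply/(colT (inv (f g)) (f (mul g y')) (f (mul g z')) s).
  have := chiK (mul (inv p) (f x)).
  by rewrite /chi mA mV' m1 fK.
pose a x := mul (inv p) (f x).
have ahom : forall x y, a (mul x y) = mul (a x) (a y).
  move=> x y; rewrite /a -(claim x y) -(mA (inv p)) (mA (f x)) (mV' (f x)) m1 //.
have abij : bijective a.
  exists (fun y => finv (mul p y)).
    by move=> y; rewrite /a mA mV' m1 fK.
  by move=> y; rewrite /a Kf mA mV m1.
case: (abij) => ainv aK Ka.
exists a, (ainv p); split; first by split.
move=> x; rewrite ahom Ka /a mA mV' m1 //.
Qed.
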